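(* Let $n$ be a positive integer, let $W\in M(n,n;\mathbb F_2)$ have all diagonal entries equal to $1$, and let $c\in\mathbb F_2^n$. Then the mean value of $|Wx+c|$ over all $x\in\mathbb F_2^n$ is $n/2$. In particular, $M(W,c)\ge n/2$, and $M(W,c)>n/2$ if the number of indices $i\in\{1,\dots,n\}$ with $c_i=1$ is not equal to $n/2$.
   Context: $\mathbb F_2=\{0,1\}$ is the field with two elements. For $u\in\mathbb F_2^n$, $|u|$ denotes the Hamming weight of $u$ (number of entries equal to $1$). $M(W,c)=\max\{|Wx+c| : x\in\mathbb F_2^n\}$. *)

(* Defs.v *)
From mathcomp Require Import all_boot all_order all_algebra.
Set Implicit Arguments. Unset Strict Implicit. Unset Printing Implicit Defensive.
Import Order.TTheory GRing.Theory Num.Theory.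
Local Open Scope ring_scope.

Definition hweight (n : nat) (u : 'cV['F_2]_n) : nat :=
  #|[set i : 'I_n | u i 0 == 1]|.

Definition Mwc (n : nat) (W : 'M['F_2]_n) (c : 'cV['F_2]_n) : nat :=
  \max_(x : 'cV['F_2]_n) hweight (W *m x + c).

(* Main.v *)
Require Import Defs.
From mathcomp Require Import all_boot all_order all_algebra.
Import Order.TTheory GRing.Theory Num.Theory.
Local Open Scope ring_scope.

Lemma F2_cases (b : 'F_2) : b = 0 \/ b = 1.
Proof. case: b => [[|[|//]]] ? ; [left|right]; exact: val_inj. Qed.

Lemma F2_flip (b : 'F_2) : (b + 1 == 1) = ~~ (b == 1).
Proof. by case: (F2_cases b) => ->. Qed.

Lemma hw_sum n (u : 'cV['F_2]_n) : hweight u = (\sum_i nat_of_bool (u i ord0 == 1%R))%N.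
Proof.
rewrite /hweight -sum1_card big_mkcond /=; apply: eq_bigr => i _.
by rewrite inE; case: (u i ord0 == 1%R).
Qed.

Lemma half_count n (W : 'M['F_2]_n) (c : 'cV['F_2]_n) (i : 'I_n) :
  W i i = 1 ->
  (2 * \sum_(x : 'cV['F_2]_n) nat_of_bool ((W *m x + c)%R i ord0 == 1%R) = #|{: 'cV['F_2]_n}|)%N.
Proof.
move=> Wii.
set d : 'cV['F_2]_n := delta_mx i 0.
have inj : injective (fun x : 'cV['F_2]_n => x + d) by apply: addIr.
have E := reindex_inj (op := addn) (P := xpredT)
   (F := fun x : 'cV['F_2]_n => nat_of_bool ((W *m x + c) i ord0 == 1%R)) inj.
rewrite mul2n -addnn {2}E /= -big_split /= -sum1_card.
apply: eq_bigr => x _.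
have -> : (W *m (x + d) + c) i ord0 = (W *m x + c) i ord0 + 1.
  rewrite mulmxDr -addrA [W *m d + c]addrC addrA !mxE.
  congr (_ + _).
  rewrite (bigD1 i) //= mxE !eqxx mulr1 Wii big1 ?addr0 // => j /negbTE ji.
  by rewrite mxE ji mulr0.
by case: (F2_cases ((W *m x + c) i ord0)) => ->.
Qed.

Theorem lemma3p1 (n : nat) (W : 'M['F_2]_n) (c : 'cV['F_2]_n) :
  (0 < n)%N ->
  (forall i : 'I_n, W i i = 1) ->
  [/\ (\sum_(x : 'cV['F_2]_n) (hweight (W *m x + c))%:R) / (#|{: 'cV['F_2]_n}|)%:R
        = (n%:R / 2 : rat),
      (n%:R / 2 : rat) <= (Mwc W c)%:R
    & ((hweight c)%:R != (n%:R / 2 : rat) -> (n%:R / 2 : rat) < (Mwc W c)%:R)].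
Proof.
move=> n0 Wd.
set N := #|{: 'cV['F_2]_n}|.
set S := (\sum_(x : 'cV['F_2]_n) hweight (W *m x + c))%N.
have S2 : (2 * S = n * N)%N.
  rewrite /S; under eq_bigr => x _ do rewrite hw_sum.
  rewrite exchange_big /=.
  rewrite big_distrr /= (eq_bigr (fun=> N)) => [|i _]; last exact: half_count.
  by rewrite sum_nat_const card_ord.
have Npos : (0 < N)%N by rewrite /N (cardD1 0).
set M := Mwc W c.
have hwM x : (hweight (W *m x + c) <= M)%N by exact: (leq_bigmax (F := fun x => hweight (W *m x + c)) x).
have SM : (S <= N * M)%N.
  rewrite /N -sum1_card big_distrl /= /S; apply: leq_sum => x _; rewrite mul1n; exact: hwM.
have nM : (n <= 2 * M)%N.
  by rewrite -(leq_pmul2r Npos) -S2 -mulnA leq_pmul2l // mulnC.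
have toR (a b : nat) : (a <= 2 * b)%N -> (a%:R / 2 : rat) <= b%:R.
  by move=> h; rewrite ler_pdivrMr // -natrM mulnC ler_nat.
split.
- rewrite -natr_sum -/S; apply/eqP; rewrite eqr_div ?pnatr_eq0 -?lt0n //.
  by rewrite -!natrM mulnC S2.
- exact: toR.
- move=> hc; rewrite lt_neqAle toR // andbT; apply: contra hc => /eqP e.
  have e2 : n = (2 * M)%N.
    by apply/eqP; rewrite -(eqr_nat rat) natrM -e mulrC divfK.
  have SNM : S = (N * M)%N.
    by apply/eqP; rewrite -(eqn_pmul2l (isT : (0 < 2)%N)) S2 e2; rewrite -mulnA (mulnC M).
  have Z : (\sum_(x : 'cV['F_2]_n) (M - hweight (W *m x + c)) == 0)%N.
    rewrite -(eqn_add2r S) add0n {2}SNM /S -big_split /=.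
    rewrite (eq_bigr (fun _ => M)) ?sum_nat_const ?/N //.
    by move=> x _; rewrite subnK.
  move: Z; rewrite sum_nat_eq0 => /forallP /(_ 0) /=; rewrite subn_eq0 mulmx0 add0r => hcM.
  have -> : hweight c = M by apply/eqP; rewrite eqn_leq hcM -(add0r c) -(mulmx0 _ W) hwM.
  by rewrite e2 natrM [_ * M%:R]mulrC mulfK.
Qed.
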